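(* If $(S,\sqcup,\cap)$ is an ado-semilattice, then $(S,\sqcup)$ is a left regular band and for all $a,b,c\in S$, $a\sqcup(b\cap c)=(a\sqcup b)\cap(a\sqcup c)$.
   Context: An o-semilattice is an algebra $(L,\cap,\sqcup)$ such that $(L,\cap)$ is a semilattice and, with $x\leq y$ iff $x=x\cap y$, for all $x,y,z$: (i) $x\leq x\sqcup y$; (ii) $(x\cap y)\sqcup(y\cap z)\leq y$; (iii) $x\sqcup y\leq x\sqcup(y\cap(x\sqcup y))$; (iv) $x\cap z\leq(x\cap y)\sqcup z$. It is distributive if $(a\cap d)\sqcup((b\cap d)\cap(c\cap d))=((a\cap d)\sqcup(b\cap d))\cap((a\cap d)\sqcup(c\cap d))$ for all $a,b,c,d$. An ado-semilattice is a distributive o-semilattice in which $\sqcup$ is associative. A left regular band is a set with a binary operation $\sqcup$ satisfying $a\sqcup(b\sqcup c)=(a\sqcup b)\sqcup c$, $a\sqcup a=a$, $a\sqcup b=(a\sqcup b)\sqcup a$. *)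

(* Defs.v *)
Section Defs.
Variable L : Type.
Variables (meet join : L -> L -> L).

Definition is_semilattice : Prop :=
  (forall x y z, meet x (meet y z) = meet (meet x y) z) /\
  (forall x y, meet x y = meet y x) /\
  (forall x, meet x x = x).

Definition sle (x y : L) : Prop := x = meet x y.

Definition is_o_semilattice : Prop :=
  is_semilattice /\
  (forall x y, sle x (join x y)) /\
  (forall x y z, sle (join (meet x y) (meet y z)) y) /\
  (forall x y, sle (join x y) (join x (meet y (join x y)))) /\
  (forall x y z, sle (meet x z) (join (meet x y) z)).

Definition is_distributive_o_semilattice : Prop :=
  is_o_semilattice /\
  forall a b c d,
    join (meet a d) (meet (meet b d) (meet c d)) =
    meet (join (meet a d) (meet b d)) (join (meet a d) (meet c d)).

Definition is_ado_semilattice : Prop :=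
  is_distributive_o_semilattice /\
  forall a b c, join a (join b c) = join (join a b) c.

End Defs.

Definition is_left_regular_band (S : Type) (op : S -> S -> S) : Prop :=
  (forall a b c, op a (op b c) = op (op a b) c) /\
  (forall a, op a a = a) /\
  (forall a b, op a b = op (op a b) a).

(* Main.v *)
Require Import Defs.
From Stdlib Require Import Setoid.

Theorem lemma3p2 (S : Type) (meet join : S -> S -> S) :
  is_ado_semilattice S meet join ->
  is_left_regular_band S join /\
  (forall a b c, join a (meet b c) = meet (join a b) (join a c)).
Proof.
  intros [[[[MA [MC MI]] [A1 [A2 [A3 A4]]]] D] AS].
  unfold sle in *.
  set (m := meet) in *. set (j := join) in *.
  assert (antisym : forall x y, x = m x y -> y = m y x -> x = y).
  { intros x y H1 H2. transitivity (m x y); [exact H1|]. rewrite MC. symmetry. exact H2. }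
  assert (refl : forall x, x = m x x). { intros; symmetry; apply MI. }
  assert (trans : forall x y z, x = m x y -> y = m y z -> x = m x z).
  { intros x y z H1 H2. rewrite H1 at 1. rewrite H2. rewrite MA. rewrite <- H1. reflexivity. }
  assert (mle_l : forall x y, m x y = m (m x y) x).
  { intros. rewrite (MC x y). rewrite <- MA. rewrite MI. reflexivity. }
  assert (mle_r : forall x y, m x y = m (m x y) y).
  { intros. rewrite <- MA. rewrite MI. reflexivity. }
  assert (le_meet : forall x y z, z = m z x -> z = m z y -> z = m z (m x y)).
  { intros x y z Hx Hy. rewrite MA. rewrite <- Hx. exact Hy. }
  assert (idem : forall x, j x x = x).
  { intros x. apply antisym.
    - pose proof (A2 x x x) as H. rewrite MI in H. exact H.
    - apply A1. }
  assert (bound : forall a b d, a = m a d -> b = m b d -> j a b = m (j a b) d).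
  { intros a b d Ha Hb. pose proof (A2 a d b) as H. rewrite (MC d b) in H.
    rewrite <- Ha, <- Hb in H. exact H. }
  assert (up : forall w z x, w = m w x -> z = m z x -> z = m z (j w z)).
  { intros w z x Hw Hz. pose proof (A4 x w z) as H.
    rewrite (MC x z), (MC x w) in H. rewrite <- Hz, <- Hw in H. exact H. }
  assert (joinle : forall v w, v = m v w -> j v w = w).
  { intros v w H. apply antisym.
    - apply bound; auto.
    - apply (up v w w); auto. }
  assert (mono : forall a v w, v = m v w -> j a v = m (j a v) (j a w)).
  { intros a v w H. replace (j a w) with (j (j a v) w).
    - apply A1.
    - rewrite <- AS. rewrite (joinle v w H). reflexivity. }
  assert (F4 : forall a b, j a b = j a (m b (j a b))).
  { intros a b. apply antisym.
    - apply A3.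
    - apply bound; [apply A1 | apply mle_r]. }
  assert (Dl : forall a b c d, a = m a d -> b = m b d -> c = m c d ->
             j a (m b c) = m (j a b) (j a c)).
  { intros a b c d Ha Hb Hc. pose proof (D a b c d) as H.
    fold m j in H. rewrite <- Ha, <- Hb, <- Hc in H. exact H. }
  assert (key : forall a b t, a = m a t -> t = m t (j a b) -> t = j a (m b t)).
  { intros a b t Ha Ht.
    assert (Hb' : m b (j a b) = m (m b (j a b)) (j a b)) by apply mle_r.
    pose proof (Dl a t (m b (j a b)) (j a b) (trans _ _ _ Ha Ht) Ht Hb') as H.
    rewrite (joinle a t Ha) in H. rewrite <- F4 in H. rewrite <- Ht in H.
    replace (m t (m b (j a b))) with (m b t) in H.
    - symmetry; exact H.
    - rewrite (MC b (j a b)), MA, <- Ht, MC. reflexivity. }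
  split.
  - split; [exact AS | split; [exact idem |]].
    intros a b. apply antisym.
    + apply A1.
    + apply bound; [apply refl | apply A1].
  - intros a b c. apply antisym.
    + apply le_meet; apply mono; [apply mle_l | apply mle_r].
    + set (t := m (j a b) (j a c)).
      assert (Hat : a = m a t) by (apply le_meet; apply A1).
      assert (E1 : t = j a (m b t)) by (apply key; [exact Hat | apply mle_l]).
      assert (E2 : t = j a (m c t)) by (apply key; [exact Hat | apply mle_r]).
      assert (E : t = j a (m (m b t) (m c t))).
      { rewrite (Dl a (m b t) (m c t) t Hat (mle_r _ _) (mle_r _ _)).
        rewrite <- E1, <- E2. symmetry. apply MI. }
      rewrite E at 1 2.
      apply mono. apply le_meet.
      * eapply trans; [apply mle_l | apply mle_l].
      * eapply trans; [apply mle_r | apply mle_l].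
Qed.
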